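(* Let $k$ be a positive integer, let $n$ and $m$ be integers with $0<m\le\binom{n}{2}$, and let $G$ be any ordered graph with vertex set $[n]$ (with the natural order) and exactly $m$ edges. Then \[ N_{\mathrm{ord}}(S_L(k), S_R(n,m)) \le N_{\mathrm{ord}}(S_L(k), G) \le N_{\mathrm{ord}}(S_L(k), S_L(n,m)). \]
   Context: An ordered graph is a graph together with a total order on its vertex set; here vertex sets are $[n]=\{1,\dots,n\}$ with the natural order. For an ordered graph $F$ on $[s]$ and an ordered graph $G$ on $[n]$, $N_{\mathrm{ord}}(F,G)$ is the number of sets $\{v_1,\dots,v_s\}\subseteq[n]$ with $v_1<\dots<v_s$ such that $\{v_i,v_j\}\in E(G)$ whenever $\{i,j\}\in E(F)$. For positive integers $n$ and $m\le\binom{n}{2}$, let $f(n,a)=\binom{a}{2}+a(n-a)$, let $a$ be the largest integer with $f(n,a)\le m$ (so $0\le a\le n$), and let $b=m-f(n,a)$. The ordered graph $S_L(n,m)$ has vertex set $[n]$ and edge set consisting of all pairs $\{v,w\}$ of distinct vertices with $v\in[a]$, $w\in[n]$, together with the edges $\{a+1,j\}$ for $a+2\le j\le a+b+1$; it has exactly $m$ edges. The ordered graph $S_R(n,m)$ is $S_L(n,m)$ with the vertex order reversed (equivalently, the ordered graph on $[n]$ obtained by relabeling each vertex $i$ of $S_L(n,m)$ as $n+1-i$). $S_L(k):=S_L(k+1,k)$ is the ordered star on $[k+1]$ with edges $\{1,j\}$ for $2\le j\le k+1$ (the center is the smallest vertex). Thus $N_{\mathrm{ord}}(S_L(k),G)=\sum_{i\in[n]}\binom{d^+_G(i)}{k}$,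 where $d^+_G(i)=|\{j>i:\{i,j\}\in E(G)\}|$. *)

(* Defs.v *)
From mathcomp Require Import all_boot.
Unset Printing Implicit Defensive.

(* Ordered graphs on [n] = {1,..,n} are represented on 'I_n = {0,..,n-1}
   (vertex i+1 of the paper is the ordinal i); the natural order is that of
   the ordinals. *)
Definition is_graph (n : nat) (G : rel 'I_n) : Prop :=
  (forall i j, G i j = G j i) /\ (forall i, G i i = false).

Definition num_edges (n : nat) (G : rel 'I_n) : nat :=
  #|[set p : 'I_n * 'I_n | (p.1 < p.2) && G p.1 p.2]|.

Definition N_ord (s n : nat) (F : rel 'I_s) (G : rel 'I_n) : nat :=
  #|[set v : {ffun 'I_s -> 'I_n} |
      [forall i : 'I_s, forall j : 'I_s, (i < j)%N ==> (v i < v j)%N] &&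
      [forall i : 'I_s, forall j : 'I_s, F i j ==> G (v i) (v j)]]|.

Definition fna (n a : nat) : nat := 'C(a, 2) + a * (n - a).

Definition aSL (n m : nat) : nat := \max_(a < n.+1 | fna n a <= m) a.
Definition bSL (n m : nat) : nat := m - fna n (aSL n m).

(* S_L(n,m), 0-indexed: vertex v in [a] (paper) is ordinal v < a;
   paper vertex a+1 is ordinal a, paper vertices a+2..a+b+1 are ordinals
   a+1..a+b. *)
Definition S_L (n m : nat) : rel 'I_n := fun v w =>
  let a := aSL n m in let b := bSL n m in
  (v != w) &&
  [|| (v < a), (w < a),
      (v == a :> nat) && (a + 1 <= w <= a + b) |
      (w == a :> nat) && (a + 1 <= v <= a + b)].

Definition S_R (n m : nat) : rel 'I_n := fun v w => S_L n m (rev_ord v) (rev_ord w).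

Definition star (k : nat) : rel 'I_k.+1 := fun i j =>
  ((i == 0 :> nat) && (j != 0 :> nat)) || ((j == 0 :> nat) && (i != 0 :> nat)).

(* Main.v *)
Require Import Defs.
From mathcomp Require Import all_boot.
From mathcomp Require Import zify.


Definition incf s n (v : 'I_s -> 'I_n) := forall i j : 'I_s, i < j -> v i < v j.
Arguments incf {s n}.

Lemma inc_inj s n (v : 'I_s -> 'I_n) : incf v -> injective v.
Proof.
move=> hv i j e; apply/val_inj/eqP; case: (ltngtP i j) => // h.
  by have := hv _ _ h; rewrite e ltnn.
by have := hv _ _ h; rewrite e ltnn.
Qed.

Lemma inc_lt s n (v : 'I_s -> 'I_n) i j : incf v -> (v i < v j) = (i < j).
Proof.
move=> hv; case: (ltngtP i j) => h; first by rewrite hv.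
  by apply/negbTE; rewrite -leqNgt ltnW // hv.
by rewrite (val_inj h) ltnn.
Qed.
Arguments inc_lt {s n v} i j.
Arguments inc_inj {s n v}.

Lemma inc_img_eq s n (v w : 'I_s -> 'I_n) : incf v -> incf w ->
  v @: setT = w @: setT -> v =1 w.
Proof.
move=> hv hw e i.
have key : forall (v w : 'I_s -> 'I_n), incf v -> incf w ->
    v @: setT = w @: setT -> ~ (v i < w i).
  move=> {hv hw e} {}v {}w hv hw e lt.
  have cnt : forall u : 'I_s -> 'I_n, incf u -> u @: setT = w @: setT ->
      #|[set y in w @: setT | y < u i]| = #|[set j : 'I_s | j < i]|.
    move=> u hu eu; rewrite -(card_imset _ (inc_inj hu)); apply: eq_card => y.
    rewrite !inE -eu; apply/andP/imsetP => [[/imsetP [j _ ->] hj]|[j]].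
      by exists j; rewrite // inE -(inc_lt _ _ hu).
    by rewrite inE => hj ->; rewrite imset_f ?inE // (inc_lt _ _ hu).
  have : [set y in w @: setT | y < v i] \proper [set y in w @: setT | y < w i].
    apply/properP; split.
      by apply/subsetP => y; rewrite !inE => /andP [-> h]; apply: ltn_trans h lt.
    by exists (v i); rewrite !inE ?ltnn ?lt ?andbF ?andbT // -e imset_f.
  by move/proper_card; rewrite (cnt v hv e) (cnt w hw erefl) ltnn.
apply/val_inj/eqP; case: (ltngtP (v i) (w i)) => // h.
  by case: (key v w hv hw e h).
by case: (key w v hw hv (esym e) h).
Qed.

Arguments inc_img_eq {s n v w}.

Lemma enum_sorted n (A : {set 'I_n}) : sorted ltn (map val (enum A)).
Proof.
  rewrite -[enum _](eq_filter (mem_enum _)).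
  rewrite -(eq_filter (mem_map val_inj _)) -filter_map.
  by rewrite (sorted_filter ltn_trans) // unlock val_ord_enum iota_ltn_sorted.
Qed.

Lemma inc_exists s n (B : {set 'I_n}) (x0 : 'I_n) : #|B| = s ->
  exists v : {ffun 'I_s -> 'I_n}, incf v /\ v @: setT = B.
Proof.
move=> cB; exists [ffun i : 'I_s => nth x0 (enum B) i]; split.
  move=> i j lij; rewrite !ffunE.
  have := sorted_ltn_nth ltn_trans (val x0) (enum_sorted _ B).
  move=> /(_ i j); rewrite !inE size_map -cardE cB !ltn_ord !(nth_map x0) -?cardE ?cB //.
  by apply.
apply/setP => y; apply/imsetP/idP => [[i _ ->]|yB].
  by rewrite ffunE -mem_enum mem_nth // -cardE cB.
have hi : index y (enum B) < s by rewrite -cB cardE index_mem mem_enum.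
by exists (Ordinal hi); rewrite // ffunE /= nth_index // mem_enum.
Qed.

Arguments inc_exists {s n B}.


Definition dp n (H : rel 'I_n) (c : 'I_n) := #|[set j : 'I_n | (c < j) && H c j]|.
Arguments dp {n}.

Lemma incfP s n (v : {ffun 'I_s -> 'I_n}) :
  [forall i : 'I_s, forall j : 'I_s, (i < j)%N ==> (v i < v j)%N] -> incf v.
Proof. by move/forallP => h i j lij; move: (h i) => /forallP/(_ j)/implyP; apply. Qed.

Lemma Nord_star n k (H : rel 'I_n) : is_graph n H ->
  N_ord k.+1 n (star k) H = \sum_(c : 'I_n) 'C(dp H c, k).
Proof.
move=> [Hsym Hirr]; rewrite /N_ord -sum1_card.
rewrite (partition_big (fun v : {ffun 'I_k.+1 -> 'I_n} => v ord0) xpredT) //.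
apply: eq_bigr => c _.
set S := [set v : {ffun 'I_k.+1 -> 'I_n} | _ & _].
set Sc := [set v | (v \in S) && (v ord0 == c)].
rewrite (eq_bigl (fun v => v \in Sc)); last by move=> v; rewrite !inE.
rewrite sum1_card.
set A := [set j : 'I_n | (c < j) && H c j].
pose Phi (v : {ffun 'I_k.+1 -> 'I_n}) := [set v x | x in [set: 'I_k.+1]] :\ c.
have memSc : forall v, v \in Sc -> [/\ incf v, v ord0 = c &
    forall i j, star k i j -> H (v i) (v j)].
  move=> v; rewrite !inE => /andP [/andP [h1 h2] /eqP h3]; split => //.
    exact: incfP.
  by move=> i j sij; move/forallP: h2 => /(_ i) /forallP /(_ j) /implyP; apply.
rewrite /dp -/A -cards_draws -(card_in_imset (f := Phi)); last first.
  move=> v w /memSc [iv v0 _] /memSc [iw w0 _] e; apply/ffunP => x.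
  apply: (inc_img_eq iv iw).
  rewrite -(setD1K (imset_f v (in_setT ord0))) -(setD1K (imset_f w (in_setT ord0))).
  by rewrite v0 w0; congr (_ |: _).
apply: eq_card => B; apply/idP/idP.
  move=> /imsetP [v /memSc [iv v0 st] ->]; rewrite inE.
  apply/andP; split.
    apply/subsetP => y; rewrite !inE => /andP [yc /imsetP [x _ yx]].
    have x0 : x != ord0 by apply: contraNneq yc => ex; rewrite yx ex v0.
    have lx : (@ord0 k) < x by rewrite lt0n.
    rewrite yx -v0 (inc_lt _ _ iv) lx /=.
    by apply: st; rewrite /star /= -lt0n lx.
  have := cardsD1 c [set v x | x in [set: 'I_k.+1]].
  rewrite (card_imset _ (inc_inj iv)) cardsT card_ord.
  by rewrite -{1}v0 imset_f ?inE // add1n => -[->].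
rewrite inE => /andP [sBA /eqP cB].
have cnB : c \notin B by apply/negP => /(subsetP sBA); rewrite inE ltnn.
have cB' : #|c |: B| = k.+1 by rewrite cardsU1 cnB cB.
have [v [iv ev]] := inc_exists c cB'.
have v0 : v ord0 = c.
  have : c \in c |: B by rewrite setU11.
  rewrite -ev => /imsetP [x _ cx].
  have : v ord0 \in c |: B by rewrite -ev imset_f.
  rewrite in_setU1 => /orP [/eqP //| vB].
  have := subsetP sBA _ vB; rewrite inE => /andP [lt _].
  have : (v ord0 <= v x)%N.
    case: (posnP x) => hx; last by apply: ltnW; rewrite (inc_lt _ _ iv).
    by rewrite (_ : x = ord0) //; apply/val_inj.
  by rewrite -cx leqNgt lt.
have vj : forall j : 'I_k.+1, j != ord0 -> v j \in A.
  move=> j j0; have : v j \in c |: B by rewrite -ev imset_f.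
  rewrite in_setU1 => /orP [/eqP e|]; last exact: (subsetP sBA).
  have : (v ord0 < v j)%N by rewrite (inc_lt _ _ iv) lt0n.
  by rewrite e v0 ltnn.
apply/imsetP; exists v; last by rewrite /Phi ev setU1K.
rewrite !inE v0 eqxx andbT; apply/andP; split.
  by apply/forallP => i; apply/forallP => j; apply/implyP => lij; apply: iv.
apply/forallP => i; apply/forallP => j; apply/implyP; rewrite /star.
case/orP => /andP [i0 j0].
  have -> : i = ord0 by apply/val_inj/eqP.
  by have := vj j j0; rewrite inE v0 => /andP [_ ->].
have -> : j = ord0 by apply/val_inj/eqP.
by have := vj i j0; rewrite inE v0 Hsym => /andP [_ ->].
Qed.


Lemma edges_dp n (H : rel 'I_n) : num_edges n H = \sum_c dp H c.
Proof.
rewrite /num_edges /dp -sum1_card.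
under [RHS]eq_bigr do rewrite -sum1_card.
rewrite pair_big_dep /=; apply: eq_bigl => p; rewrite !inE.
by case: p.
Qed.

Lemma card_range n lo hi : hi <= n -> #|[set j : 'I_n | lo <= j < hi]| = hi - lo.
Proof.
move=> hn; rewrite -sum1_card.
have -> : \sum_(j in [set j : 'I_n | lo <= j < hi]) 1 = \sum_(j < n | (lo <= j) && (j < hi)) 1.
  by apply: eq_bigl => j; rewrite inE.
rewrite -(big_mkord (fun j => (lo <= j) && (j < hi)) (fun _ => 1)) -big_nat_widen //.
transitivity (\sum_(lo <= i < hi) 1); last by rewrite sum_nat_const_nat muln1.
by rewrite (big_nat_widenl lo 0).
Qed.


Lemma dp_cap n (H : rel 'I_n) c : dp H c <= n - c.+1.
Proof.
rewrite -(@card_range n c.+1 n (leqnn n)); apply: subset_leq_card.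
by apply/subsetP => j; rewrite !inE ltn_ord andbT => /andP [].
Qed.

Lemma aSL_props n m : m <= 'C(n, 2) ->
  [/\ aSL n m <= n, fna n (aSL n m) <= m & (aSL n m < n -> m < fna n (aSL n m).+1)].
Proof.
move=> hm.
have ne : 0 < #|[pred a : 'I_n.+1 | fna n a <= m]|.
  by apply/card_gt0P; exists ord0; rewrite inE /fna bin0n mul0n.
have [i0 hi0 e] := eq_bigmax_cond (fun a : 'I_n.+1 => nat_of_ord a) ne.
have ea : aSL n m = i0 by rewrite /aSL -e.
rewrite ea; split.
- by rewrite -ltnS ltn_ord.
- by move: hi0; rewrite inE.
- move=> lt; rewrite ltnNge; apply/negP => h.
  have hi : i0.+1 < n.+1 by rewrite ltnS.
  have := @leq_bigmax_cond _ (fun a : 'I_n.+1 => fna n a <= m) (fun a : 'I_n.+1 => nat_of_ord a) (Ordinal hi) h.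
  by rewrite -/(aSL n m) ea /= ltnn.
Qed.

Lemma fnaS n a : a < n -> fna n a.+1 = fna n a + (n - a.+1).
Proof.
move=> lt; rewrite /fna binS bin1.
have -> : n = a + (n - a.+1).+1 by lia.
set q := n - a.+1.
have -> : a + q.+1 - a.+1 = q by lia.
have -> : a + q.+1 - a = q.+1 by lia.
rewrite mulSn mulnS; lia.
Qed.

Lemma sum_cap n a : a <= n -> \sum_(i < a) (n - i.+1) = fna n a.
Proof.
elim: a => [|a IH] lt; first by rewrite big_ord0 /fna bin0n mul0n.
by rewrite big_ord_recr /= IH ?fnaS // ltnW.
Qed.

Lemma bSL_props n m : m <= 'C(n, 2) ->
  [/\ aSL n m <= n, fna n (aSL n m) + bSL n m = m,
     (aSL n m < n -> aSL n m + bSL n m < n.-1) & (aSL n m = n -> bSL n m = 0)].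
Proof.
move=> hm; have [h1 h2 h3] := aSL_props _ _ hm; split => //.
- by rewrite /bSL subnKC.
- move=> lt; have := h3 lt; rewrite fnaS // /bSL; lia.
- move=> e; rewrite /bSL e; move: hm; rewrite /fna subnn muln0 addn0.
  by move=> hm; apply/eqP; rewrite subn_eq0.
Qed.


Lemma SL_graph n m : is_graph n (S_L n m).
Proof.
split => [i j|i]; rewrite /S_L; set a := aSL n m; set b := bSL n m; cbv zeta.
  rewrite eq_sym; congr (_ && _); rewrite orbCA; do 2 congr (_ || _); exact: orbC.
by rewrite eqxx.
Qed.

Lemma SR_graph n m : is_graph n (S_R n m).
Proof.
have [s r] := SL_graph n m.
by split => [i j|i]; rewrite /S_R; [exact: s | exact: r].
Qed.


Lemma dp_SL n m c : m <= 'C(n, 2) ->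
  dp (S_L n m) c = if c < aSL n m then n - c.+1
                   else if c == aSL n m :> nat then bSL n m else 0.
Proof.
move=> hm; have [h1 h2 h3 h4] := bSL_props _ _ hm.
rewrite /dp /S_L; cbv zeta; move: h1 h2 h3 h4.
generalize (bSL n m) (aSL n m) => b a h1 h2 h3 h4.
have cn := ltn_ord c.
case: ltnP => ca.
  rewrite -(@card_range n c.+1 n) //; apply: eq_card => j.
  rewrite !inE -val_eqE /=; have := ltn_ord j; lia.
case: eqP => ea.
  have an : a < n by rewrite -ea.
  have := h3 an => ab.
  transitivity ((a + b).+1 - a.+1); last by lia.
  rewrite -(@card_range n a.+1 (a + b).+1); last by lia.
  apply: eq_card => j.
  rewrite !inE -val_eqE /=; have := ltn_ord j; lia.
apply/eqP; rewrite cards_eq0; apply/eqP/setP => j.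
rewrite !inE -val_eqE /=; have := ltn_ord j; lia.
Qed.


Lemma dp_SR n m c : m <= 'C(n, 2) ->
  dp (S_R n m) c = if n - c.+1 < aSL n m then n - c.+1
                   else aSL n m + (aSL n m < n - c.+1 <= aSL n m + bSL n m).
Proof.
move=> hm; have [h1 h2 h3 h4] := bSL_props _ _ hm.
rewrite /dp /S_R /S_L; cbv zeta; move: h1 h2 h3 h4.
generalize (bSL n m) (aSL n m) => b a h1 h2 h3 h4.
have cn := ltn_ord c.
case: ifP => ca.
  transitivity (n - (n - (n - c.+1))); last by lia.
  rewrite -(@card_range n (n - (n - c.+1)) n) //; apply: eq_card => j.
  rewrite !inE -val_eqE /=; have := ltn_ord j; lia.
case: (boolP (a < n - c.+1 <= a + b)) => hb.
  transitivity (n - (n - (a + 1))); last by lia.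
  rewrite -(@card_range n (n - (a + 1)) n) //; apply: eq_card => j.
  rewrite !inE -val_eqE /=; have := ltn_ord j; lia.
transitivity (n - (n - (a + 0))); last by lia.
rewrite -(@card_range n (n - (a + 0)) n) //; apply: eq_card => j.
rewrite !inE -val_eqE /=; have := ltn_ord j; lia.
Qed.


Definition hk (k' u : nat) := if u is u'.+1 then 'C(u'.+1, k') - 'C(u', k') else 'C(0, k').

Lemma tel k' x : \sum_(u < x.+1) hk k' u = 'C(x, k').
Proof.
elim: x => [|x IH]; first by rewrite big_ord_recr big_ord0.
rewrite big_ord_recr IH /= subnKC //; exact: leq_bin2l.
Qed.

Lemma dec k' N x : x <= N -> 'C(x, k'.+1) = \sum_(u < N) hk k' u * (x - u).
Proof.
elim: x => [|x IH] hx.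
  by rewrite bin0n /=; apply/esym/big1 => u _; rewrite sub0n muln0.
have -> : \sum_(u < N) hk k' u * (x.+1 - u) =
    \sum_(u < N) hk k' u * (x - u) + \sum_(u < N) (if u < x.+1 then hk k' u else 0).
  rewrite -big_split; apply: eq_bigr => u _ /=; case: ltnP => hu.
    by rewrite subSn // mulnS addnC.
  have -> : x.+1 - u = 0 by apply/eqP; rewrite subn_eq0.
  have -> : x - u = 0 by apply/eqP; rewrite subn_eq0 ltnW.
  by rewrite muln0.
rewrite -IH ?(ltnW hx) // -big_mkcond -(big_ord_widen N (hk k') hx) tel.
by rewrite binS.
Qed.

Lemma conv_cmp n N k (d e : 'I_n -> nat) : 0 < k ->
  (forall i, d i <= N) -> (forall i, e i <= N) ->
  (forall t, \sum_i (d i - t) <= \sum_i (e i - t)) ->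
  \sum_i 'C(d i, k) <= \sum_i 'C(e i, k).
Proof.
case: k => // k' _ hd he hT.
rewrite (eq_bigr _ (fun i _ => dec k' _ _ (hd i))) (eq_bigr _ (fun i _ => dec k' _ _ (he i))).
rewrite exchange_big [X in _ <= X]exchange_big /=.
apply: leq_sum => u _; rewrite -!big_distrr /=.
by apply: leq_mul.
Qed.

Lemma sorted_sum_aux n (P : pred 'I_n) (f : nat -> nat) :
  (forall x y, x <= y -> f y <= f x) ->
  \sum_(i < n) (if P i then f i else 0) <= \sum_(i < \sum_(i < n) (P i : nat)) f i
  /\ \sum_(i < n) (P i : nat) <= n.
Proof.
move=> fm; elim: n P => [|n IH] P; first by rewrite !big_ord0.
have [IH1 IH2] := IH (fun i => P (widen_ord (leqnSn n) i)).
rewrite !big_ord_recr /=.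
case: (P ord_max) => /=; last by rewrite !addn0 IH1 ltnW // ltnS.
rewrite addn1 big_ord_recr /=; split; last by rewrite ltnS.
apply: leq_add => //; exact: fm.
Qed.

Lemma sorted_sum n (P : pred 'I_n) (f : nat -> nat) :
  (forall x y, x <= y -> f y <= f x) ->
  \sum_(i < n | P i) f i <= \sum_(i < #|P|) f i.
Proof.
move=> fm; have [h _] := sorted_sum_aux _ P _ fm.
rewrite big_mkcond; apply: (leq_trans h).
have -> : \sum_(i < n) (P i : nat) = #|P|.
  rewrite -sum1_card [RHS]big_mkcond /=; apply: eq_bigr => i _.
  by rewrite unfold_in; case: (P i).
by [].
Qed.


Lemma sum_lt_const n p t : p <= n -> \sum_(i < n | i < p) t = t * p.
Proof.
move=> pn.
transitivity (\sum_(0 <= i < p) t); last by rewrite sum_nat_const_nat subn0 mulnC.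
rewrite (big_nat_widen 0 p n xpredT) // big_mkord.
by apply: eq_bigl.
Qed.

Lemma max_cmp n m (d s : 'I_n -> nat) t :
  (forall i, d i <= n - i.+1) -> \sum_i d i <= m ->
  (forall p, p <= n -> minn m (\sum_(i < p) (n - i.+1)) <= \sum_(i < n | i < p) s i) ->
  \sum_i (d i - t) <= \sum_i (s i - t).
Proof.
move=> hd hm hs.
set J := [set i | t < d i].
have e1 : \sum_i (d i - t) + t * #|J| = \sum_(i in J) d i.
  rewrite (bigID (mem J)) /= [X in _ + X + _]big1 ?addn0; last first.
    by move=> i; rewrite inE -leqNgt => h; apply/eqP; rewrite subn_eq0.
  rewrite mulnC -sum_nat_const -big_split; apply: eq_bigr => i.
  by rewrite inE => h; change (d i - t + t = d i); rewrite subnK // ltnW.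
have e2 : \sum_(i in J) d i <= m.
  apply: leq_trans hm; rewrite [X in _ <= X](bigID (mem J)) /=; exact: leq_addr.
have e3 : \sum_(i in J) d i <= \sum_(i < #|J|) (n - i.+1).
  apply: (@leq_trans (\sum_(i in J) (n - i.+1))); first by apply: leq_sum => i _; exact: hd.
  apply: (@sorted_sum n (mem J) (fun i => n - i.+1)) => x y xy; lia.
have pn : #|J| <= n by rewrite -[X in _ <= X]card_ord max_card.
have e4 := hs #|J| pn.
have e5 : \sum_(i < n | i < #|J|) s i <= \sum_(i < n | i < #|J|) (s i - t) + t * #|J|.
  rewrite -(sum_lt_const n #|J| t pn) -big_split /=; apply: leq_sum => i _; lia.
have e6 : \sum_(i < n | i < #|J|) (s i - t) <= \sum_i (s i - t).
  rewrite [X in _ <= X](bigID (fun i : 'I_n => i < #|J|)) /=; exact: leq_addr.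
lia.
Qed.

Lemma min_cmp n a (d w : 'I_n -> nat) t :
  (forall i, d i <= n - i.+1) -> \sum_i w i <= \sum_i d i ->
  (forall i, w i <= a.+1) ->
  (forall i, t <= a -> minn (w i) t = minn (n - i.+1) t) ->
  \sum_i (w i - t) <= \sum_i (d i - t).
Proof.
move=> hd hs hwa hw; case: (leqP t a) => ta; last first.
  by rewrite big1 // => i _; apply/eqP; rewrite subn_eq0; apply: leq_trans (hwa i) ta.
have ew : \sum_i (w i - t) + \sum_i minn (w i) t = \sum_i w i.
  by rewrite -big_split; apply: eq_bigr => i _; simpl; lia.
have ed : \sum_i (d i - t) + \sum_i minn (d i) t = \sum_i d i.
  by rewrite -big_split; apply: eq_bigr => i _; simpl; lia.
have em : \sum_i minn (d i) t <= \sum_i minn (w i) t.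
  by apply: leq_sum => i _; rewrite hw //; have := hd i; lia.
lia.
Qed.

Lemma edges_SR n m : num_edges n (S_R n m) <= num_edges n (S_L n m).
Proof.
rewrite /num_edges.
pose f := fun p : 'I_n * 'I_n => (rev_ord p.2, rev_ord p.1).
have finj : injective f.
  move=> [x1 y1] [x2 y2] [e1 e2]; congr pair; apply/val_inj; move: (ltn_ord x1) (ltn_ord x2) (ltn_ord y1) (ltn_ord y2) => /=; lia.
rewrite -(card_imset _ finj); apply: subset_leq_card.
apply/subsetP => q /imsetP [[x y]]; rewrite !inE /= => /andP [lt e] ->.
have [sym _] := SL_graph n m.
have rv : forall z : 'I_n, nat_of_ord (rev_ord z) = n - z.+1 by [].
rewrite /f /= sym -[S_L n m _ _]/(S_R n m x y) e andbT.
have := ltn_ord y; lia.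
Qed.


Lemma sum_dL n m : m <= 'C(n, 2) -> \sum_c dp (S_L n m) c = m.
Proof.
move=> hm; have [h1 h2 h3 h4] := bSL_props _ _ hm.
rewrite (eq_bigr _ (fun c _ => dp_SL n m c hm)).
move: h1 h2 h3 h4; generalize (bSL n m) (aSL n m) => b a h1 h2 h3 h4.
rewrite (bigID (fun c : 'I_n => c < a)) /=.
rewrite (eq_bigr (fun c : 'I_n => n - c.+1)); last by move=> c ->.
rewrite -(big_ord_widen n (fun c => n - c.+1) h1) sum_cap //.
rewrite -[X in _ = X]h2; congr (_ + _).
case: (ltnP a n) => an.
  rewrite (bigD1 (Ordinal an)) /=; last by rewrite ltnn.
  rewrite ltnn eqxx big1 ?addn0 // => c /andP [hca hc].
  have -> : (val c == a) = false by apply/negbTE; apply: contra hc => /eqP e; apply/eqP/val_inj.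
  by rewrite (negbTE hca).
have e : a = n by apply/eqP; rewrite eqn_leq h1 an.
rewrite h4 // big1 // => c hca; by rewrite (negbTE hca) if_same.
Qed.

Lemma dp_le_n n (H : rel 'I_n) c : dp H c <= n.
Proof. exact: leq_trans (dp_cap _ H c) (leq_subr _ _). Qed.

Theorem theorem2 (k n m : nat) (G : rel 'I_n) :
  0 < k -> 0 < m -> m <= 'C(n, 2) ->
  is_graph n G -> num_edges n G = m ->
  N_ord k.+1 n (star k) (S_R n m) <= N_ord k.+1 n (star k) G /\
  N_ord k.+1 n (star k) G <= N_ord k.+1 n (star k) (S_L n m).
Proof.
move=> hk hm0 hm hG hE.
rewrite (Nord_star _ _ _ hG) (Nord_star _ _ _ (SL_graph n m)) (Nord_star _ _ _ (SR_graph n m)).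
have sG : \sum_c dp G c = m by rewrite -edges_dp.
have sL := sum_dL _ _ hm.
have sR : \sum_c dp (S_R n m) c <= m.
  by rewrite -edges_dp; apply: leq_trans (edges_SR n m) _; rewrite edges_dp sL.
split; apply: (@conv_cmp n n) => //; try (move=> i; exact: dp_le_n).
  move=> t; apply: (@min_cmp n (aSL n m)).
  - move=> i; exact: dp_cap.
  - by rewrite sG.
  - move=> i; rewrite dp_SR //; case: ifP => h; lia.
  - move=> i ta; rewrite dp_SR //; case: ifP => h; lia.
move=> t; apply: (@max_cmp n m).
- move=> i; exact: dp_cap.
- by rewrite sG.
move=> p pn.
have [h1 h2 h3 h4] := bSL_props _ _ hm.
case: (leqP p (aSL n m)) => pa.
  rewrite (big_ord_widen n (fun i => n - i.+1) pn).
  rewrite [X in _ <= X](eq_bigr (fun i : 'I_n => n - i.+1)); first exact: geq_minr.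
  move=> i ip; rewrite dp_SL // ifT //; exact: leq_trans ip pa.
apply: leq_trans (geq_minl _ _) _.
rewrite -[X in X <= _]sL (bigID (fun i : 'I_n => i < p)) /= [X in _ + X]big1 ?addn0 //.
move=> i; rewrite -leqNgt => ip; rewrite dp_SL //.
have ia : aSL n m < i by apply: leq_trans pa ip.
rewrite ifF; last by apply/negbTE; rewrite -leqNgt ltnW.
by rewrite ifF //; apply/negbTE; rewrite neq_ltn ia orbT.

Qed.
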